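(* Let $T$ be a tournament and $X=(v_1,\dots,v_k)$, $k\ge2$, a list of distinct vertices of $T$ satisfying the $U$-property. Then $T[\{v_1,\dots,v_k\}]$ is the tournament $U_k$ (with $v_i$ playing the role of the $i$-th vertex of $U_k$).
   Context: A tournament is a digraph with exactly one arc between each pair of distinct vertices; $d^-(v)$ is the in-degree of $v$ in $T$. A list $(v_1,\dots,v_k)$ with $k\ge2$ satisfies the $U$-property if $d^-(v_1)=1$ and, for each $i\in\{2,\dots,k\}$, $(v_i,v_{i-1})\in A(T)$ and $d^-(v_i)=i-1$. $U_k$ is the tournament on $\{v_1,\dots,v_k\}$ with arc set $\{(v_{i+1},v_i): i\in[k-1]\}\cup\{(v_i,v_j): 1\le i<k,\ i+1<j\le k\}$. *)

(* Defs.v *)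
From mathcomp Require Import all_boot.
Set Implicit Arguments. Unset Strict Implicit. Unset Printing Implicit Defensive.

Definition is_tournament (V : finType) (arc : rel V) : Prop :=
  (forall x, ~~ arc x x) /\
  (forall x y, x != y -> arc x y (+) arc y x).

Definition indeg (V : finType) (arc : rel V) (v : V) : nat :=
  #|[set u | arc u v]|.

(* U-property for the list (v 1, ..., v k) (1-based indexing). *)
Definition U_property (V : finType) (arc : rel V) (k : nat) (v : nat -> V) : Prop :=
  indeg arc (v 1) = 1 /\
  (forall i, 2 <= i <= k -> arc (v i) (v i.-1) /\ indeg arc (v i) = i.-1).

Definition U_arc (k : nat) (i j : nat) : bool :=
  [&& 1 <= j, i == j.+1 & i <= k] || [&& 1 <= i, i < k, i.+1 < j & j <= k].

(* Main.v *)
Require Import Defs.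
From mathcomp Require Import all_boot.
From mathcomp Require Import zify.

Lemma key (V : finType) (arc : rel V) (k : nat) (v : nat -> V) :
  is_tournament arc ->
  2 <= k ->
  {in [pred i | 1 <= i <= k] &, injective v} ->
  U_property arc k v ->
  forall i, 1 <= i -> i < k -> forall j, i.+1 < j <= k -> arc (v i) (v j).
Proof.
move=> [irr tot] k2 inj [h1 hU].
elim/ltn_ind => i IH i1 ik j /andP [ij jk].
set s := rcons (iota 1 (i.-2)) i.+1.
have sr : forall m, m \in s -> 1 <= m <= k.
  move=> m; rewrite mem_rcons inE mem_iota => /orP [/eqP -> | /andP [a b]]; lia.
have us : uniq s.
  rewrite rcons_uniq iota_uniq andbT mem_iota; apply/negP => /andP [a b]; lia.
have ums : uniq (map v s).
  rewrite map_inj_in_uniq //; move=> x y xs ys; apply: inj; rewrite inE; exact: sr.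
have deg : indeg arc (v i) = (i.-2).+1.
  have [->|i2] := eqVneq i 1; first by rewrite h1.
  have [_ ->] := hU i (ltac:(lia)); lia.
set S := [set u | arc u (v i)].
set A := [set x in map v s].
have AS : A \subset S.
  apply/subsetP => x; rewrite inE => /mapP [m ms ->]; rewrite inE.
  move: ms; rewrite mem_rcons inE mem_iota => /orP [/eqP -> | /andP [a b]].
    by have [] := hU i.+1 (ltac:(lia)).
  by apply: IH; lia.
have cA : #|A| = (i.-2).+1.
  by rewrite cardsE (card_uniqP ums) size_map size_rcons size_iota.
have SA : S = A.
  apply/eqP; rewrite eq_sym eqEcard AS /= cA; by rewrite /indeg in deg; rewrite deg.
have vji : v j != v i.
  apply/eqP => /inj; rewrite !inE; move=> H; have := H ltac:(lia) ltac:(lia); lia.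
have := tot _ _ vji.
case: (boolP (arc (v j) (v i))) => a; last by move=> t; move: t a; case: (arc (v i) (v j)); case: (arc (v j) (v i)).
have : v j \in S by rewrite inE.
rewrite SA inE => /mapP [m ms] /inj.
have := sr m ms; move: ms; rewrite mem_rcons inE mem_iota => ms mr H.
have := H ltac:(rewrite inE; lia) ltac:(rewrite inE; lia).
move: ms => /orP [/eqP -> | /andP [a1 b]]; lia.
Qed.

Theorem mainTheorem17 (V : finType) (arc : rel V) (k : nat) (v : nat -> V) :
  is_tournament arc ->
  2 <= k ->
  {in [pred i | 1 <= i <= k] &, injective v} ->
  U_property arc k v ->
  forall i j, 1 <= i <= k -> 1 <= j <= k ->
    arc (v i) (v j) = U_arc k i j.
Proof.
move=> T k2 inj U i j hi hj.
have K := @key _ _ _ _ T k2 inj U.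
have [irr tot] := T.
have [_ hU] := U.
have neq : forall a b, 1 <= a <= k -> 1 <= b <= k -> a != b -> v a != v b.
  move=> a b ha hb ab; apply/eqP => /inj H; move: ab; rewrite H ?inE //; by rewrite eqxx.
have anti : forall a b, 1 <= a <= k -> 1 <= b <= k -> a != b ->
    arc (v a) (v b) -> arc (v b) (v a) = false.
  move=> a b ha hb ab h; have := tot _ _ (neq a b ha hb ab); rewrite h; by case: (arc _ _).
rewrite /U_arc.
have [->|ne] := eqVneq i j.
  rewrite (negbTE (irr _)); apply/esym/negbTE; apply/negP => /orP [/and3P [_ /eqP e _]|/and4P [_ _ e _]]; lia.
have [e|ne1] := eqVneq i j.+1.
  rewrite e; have [-> _] := hU j.+1 (ltac:(lia)); apply/esym/orP; left; apply/and3P; split=> //; lia.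
have [e|ne2] := eqVneq j i.+1.
  have [h _] := hU j (ltac:(lia)); rewrite e in h *.
  rewrite (anti i.+1 i) //; try lia.
have [lt|gt] := ltnP i j.
  by rewrite K //; lia.
have kji : arc (v j) (v i) by apply: K; lia.
by rewrite (anti j i) //; lia.
Qed.
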